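(* Let $\varphi=\forall x_1\exists y_1\cdots\forall x_k\exists y_k\,P$ be a positive Horn sentence over a finite relational signature $\sigma$ with $P$ a conjunction of equality-free atomic $\sigma$-formulas, and let $\alpha$ be a positive integer or $\omega$. For every finite substructure $\mathcal{A}$ of $\mathcal{T}_\varphi(C_\alpha)$ (with domain $A$) there is a constant-conservative homomorphism from $\mathcal{A}$ to $\mathcal{T}^{|A|}_\varphi(C_\alpha)$.
   Context: Let $f_1,\dots,f_k$ be new function symbols, $f_i$ of arity $i$, and $\mathrm{Sk}(\varphi)=\forall x_1\cdots\forall x_k\,P(x_1,f_1(x_1),\dots,x_k,f_k(x_1,\dots,x_k))$. $C_\alpha=\{c_1,\dots,c_\alpha\}$ (or $\{c_1,c_2,\dots\}$ if $\alpha=\omega$) are new constants, $T_\varphi(C_\alpha)$ is the set of closed terms built from $C_\alpha$ with the $f_i$, and the rank of a term is its maximal nesting depth of function symbols. $\mathcal{T}_\varphi(C_\alpha)$ is the $\sigma$-structure on $T_\varphi(C_\alpha)$ in which $R(t_1,\dots,t_p)$ holds iff it is obtained from an atom of the matrix of $\mathrm{Sk}(\varphi)$ by substituting terms of $T_\varphi(C_\alpha)$ for $x_1,\dots,x_k$. $\mathcal{T}^m_\varphi(C_\alpha)$ is the induced substructure of $\mathcal{T}_\varphi(C_\alpha)$ on terms of rank $\leq m$. A partial map $f$ on $T_\varphi(C_\alpha)$ is constant-conservative if for every $t$ in its domain, every constant occurring in $f(t)$ occurs in $t$. *)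

(* Defs.v *)
From mathcomp Require Import all_boot.
Set Implicit Arguments. Unset Strict Implicit. Unset Printing Implicit Defensive.

(* Closed terms over constants C_alpha and Skolem symbols f_1..f_k are encoded
   as GenTree.tree nat:
     GenTree.Leaf n        = the constant c_{n+1}
     GenTree.Node i [t_0;..;t_i] = f_{i+1}(t_0,..,t_i)   (arity i+1).
   Well-formedness (membership in T_phi(C_alpha)) is the predicate [wf]. *)
Definition term := GenTree.tree nat.

(* Variables of the matrix P: inl i = x_{i+1}, inr i = y_{i+1}. *)
Definition var (k : nat) : Type := ('I_k + 'I_k)%type.

(* alpha : None = omega, Some a = positive integer a. *)
Fixpoint wf (k : nat) (alpha : option nat) (t : term) : bool :=
  match t with
  | GenTree.Leaf n => if alpha is Some a then n < a else true
  | GenTree.Node i ts => [&& i < k, size ts == i.+1 & all (wf k alpha) ts]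
  end.

Fixpoint rank (t : term) : nat :=
  match t with
  | GenTree.Leaf _ => 0
  | GenTree.Node _ ts => (foldr maxn 0 (map rank ts)).+1
  end.

Fixpoint consts (t : term) : seq nat :=
  match t with
  | GenTree.Leaf n => [:: n]
  | GenTree.Node _ ts => flatten (map consts ts)
  end.

(* Value of a variable under the Skolemized substitution:
   x_{i+1} |-> s i,  y_{i+1} |-> f_{i+1}(s 0, ..., s i). *)
Definition skval (k : nat) (s : 'I_k -> term) (v : var k) : term :=
  match v with
  | inl i => s i
  | inr i => GenTree.Node i
      (map (fun j : 'I_i.+1 => s (widen_ord (ltn_ord i) j)) (enum 'I_i.+1))
  end.

Definition atom (Sig : finType) (ar : Sig -> nat) (k : nat) :=
  {R : Sig & (ar R).-tuple (var k)}.

Definition TRel (Sig : finType) (ar : Sig -> nat) (k : nat)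
  (P : seq (atom ar k)) (alpha : option nat) (R : Sig) (ts : seq term) : Prop :=
  exists2 a, a \in P &
    projT1 a = R /\
    exists s : 'I_k -> term,
      (forall i, wf k alpha (s i)) /\ ts = map (skval s) (projT2 a).

(* Main.v *)
Require Import Defs.
From mathcomp Require Import all_boot.
From mathcomp Require Import zify.

Fixpoint Hm (A : seq term) (t : term) : term :=
  match t with
  | GenTree.Leaf n => GenTree.Leaf n
  | GenTree.Node i ts => GenTree.Node i
      (map (fun u => if u \in A then Hm A u else GenTree.Leaf (head 0 (consts u))) ts)
  end.

Definition Gm (A : seq term) (u : term) : term :=
  if u \in A then Hm A u else GenTree.Leaf (head 0 (consts u)).

Lemma Hm_node A i ts : Hm A (GenTree.Node i ts) = GenTree.Node i (map (Gm A) ts).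
Proof. by []. Qed.

Lemma tree_ind' (Pr : term -> Prop) :
  (forall n, Pr (GenTree.Leaf n)) ->
  (forall i ts, (forall u, u \in ts -> Pr u) -> Pr (GenTree.Node i ts)) ->
  forall t, Pr t.
Proof.
move=> HL HN.
have HF : forall t, List.Forall Pr (match t with GenTree.Leaf _ => [::] | GenTree.Node _ ts => ts end) -> Pr t.
  case=> [n|i ts] //= HF. apply: HN => u.
  elim: ts HF => [|v vs IHv] //= HF. inversion HF; subst.
  rewrite inE => /orP [/eqP ->|Hu] //. exact: IHv.
refine (fix IH t := HF t _).
case: t => [n|i ts]; first by constructor.
exact: ((fix IHl (l : seq term) : List.Forall Pr l :=
  match l with [::] => List.Forall_nil Pr | v :: vs => List.Forall_cons v (IH v) (IHl vs) end) ts).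
Qed.

Lemma foldr_max_le (s : seq nat) m : (forall x, x \in s -> x <= m) -> foldr maxn 0 s <= m.
Proof.
elim: s => [|x s IH] //= H. rewrite geq_max H ?mem_head //= IH // => y Hy.
by apply: H; rewrite inE Hy orbT.
Qed.

Lemma foldr_max_ge (s : seq nat) x : x \in s -> x <= foldr maxn 0 s.
Proof.
elim: s => [|y s IH] //=. rewrite inE => /orP [/eqP ->|Hx]; first exact: leq_maxl.
by rewrite (leq_trans (IH Hx)) // leq_maxr.
Qed.

Lemma rank_sub i ts u : u \in ts -> rank u < rank (GenTree.Node i ts).
Proof. move=> Hu /=. by rewrite ltnS foldr_max_ge // map_f. Qed.

Arguments rank_sub {i ts u}.

Lemma wf_consts k alpha t : wf k alpha t ->
  consts t != [::] /\ all (fun c => wf k alpha (GenTree.Leaf c)) (consts t).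
Proof.
elim/tree_ind': t => [n|i ts IH] /=; first by move=> ->.
case/and3P=> _ /eqP Hs /allP Hall. split.
  case: ts Hs IH Hall => [|v vs] //= _ IH Hall.
  have [H1 _] := IH v (mem_head _ _) (Hall v (mem_head _ _)).
  by case: (consts v) H1.
apply/allP=> c /flattenP [cs /mapP [u Hu ->] Hc].
have [_ /allP] := IH u Hu (Hall u Hu). by apply.
Qed.

Arguments wf_consts {k alpha t}.

Lemma wf_Hm k alpha A t : wf k alpha t -> wf k alpha (Hm A t).
Proof.
elim/tree_ind': t => [n|i ts IH] //=.
case/and3P=> -> /eqP Hs /allP Hall /=. rewrite size_map Hs eqxx /=.
apply/allP=> v /mapP [u Hu ->]. case: (u \in A); first exact: IH u Hu (Hall u Hu).
have [H1 /allP H2] := wf_consts (Hall u Hu). apply: H2.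
by case: (consts u) H1 => //= c cs _; rewrite mem_head.
Qed.

Lemma consts_Hm k alpha A t : wf k alpha t -> {subset consts (Hm A t) <= consts t}.
Proof.
elim/tree_ind': t => [n|i ts IH]; first by move=> _ x.
rewrite /=; case/and3P=> _ _ /allP Hall c /flattenP [cs /mapP [v /mapP [u Hu ->] ->] Hc].
apply/flattenP; exists (consts u); first exact: map_f.
move: Hc; case: (u \in A); first exact: (IH u Hu (Hall u Hu) c).
have [H1 _] := wf_consts (Hall u Hu).
by case: (consts u) H1 => //= c' cs' _; rewrite inE => /eqP ->; rewrite mem_head.
Qed.

Lemma count_lt (T : eqType) (p q : pred T) s x :
  (forall y, q y -> p y) -> x \in s -> p x -> ~~ q x -> count q s < count p s.
Proof.
move=> Hqp; elim: s => [|y s IH] //=. rewrite inE => /orP [/eqP <-|Hx] Hp Hq.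
  rewrite Hp (negbTE Hq) /= add0n ltnS.
  by apply: sub_count => z; apply: Hqp.
have := IH Hx Hp Hq. case Hy: (q y); first by rewrite (Hqp _ Hy) /= ltn_add2l.
case: (p y) => /=; lia.
Qed.

Lemma rank_Hm A t :
  rank (Hm A t) <= count (fun u => rank u < rank t) (undup A) + (rank t != 0).
Proof.
elim/tree_ind': t => [n|i ts IH] //.
rewrite Hm_node /= addn1 ltnS. apply: foldr_max_le => x /mapP [v /mapP [u Hu ->] ->].
rewrite /Gm. case HA: (u \in A); last by [].
apply: leq_trans (IH u Hu) _.
case Hr: (rank u == 0).
  rewrite addn0. apply: sub_count => y Hy. have := @rank_sub i ts u Hu. lia.
rewrite addn1. apply: (@count_lt _ _ _ _ u).
- move=> y Hy. have := @rank_sub i ts u Hu. move=> H; exact: ltn_trans Hy H.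
- by rewrite mem_undup.
- exact: rank_sub.
- by rewrite /= ltnn.
Qed.

Theorem mainTheorem13 (Sig : finType) (ar : Sig -> nat) (k : nat)
  (P : seq (atom ar k)) (alpha : option nat)
  (halpha : if alpha is Some a then 0 < a else true)
  (A : seq term) (hA : all (wf k alpha) A) :
  exists h : term -> term,
    (* h maps A into T^{|A|}_phi(C_alpha) *)
    (forall t, t \in A -> wf k alpha (h t) /\ rank (h t) <= size (undup A)) /\
    (* h is a homomorphism from the induced substructure on A *)
    (forall (R : Sig) (ts : seq term), {subset ts <= A} ->
        TRel P alpha R ts -> TRel P alpha R (map h ts)) /\
    (* h is constant-conservative *)
    (forall t, t \in A -> {subset consts (h t) <= consts t}).
Proof.
exists (Hm A). split; [|split].
- move=> t Ht. split; first by apply: wf_Hm; exact: (allP hA).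
  apply: leq_trans (rank_Hm A t) _.
  case Hr: (rank t == 0) => /=.
    rewrite addn0. exact: count_size.
  rewrite addn1. have := count_predC (fun u => rank u < rank t) (undup A).
  have : 0 < count (predC (fun u => rank u < rank t)) (undup A).
    rewrite -has_count. apply/hasP. exists t; first by rewrite mem_undup.
    by rewrite /= ltnn.
  move=> H1 H2; rewrite -H2. by rewrite -addn1 leq_add2l.
- move=> R ts Hsub [a Ha [Hr [s [Hs Hts]]]].
  exists a => //. split => //. exists (fun i => Gm A (s i)). split.
    move=> i. rewrite /Gm. case: (s i \in A); first exact: wf_Hm.
    have [H1 /allP H2] := wf_consts (Hs i). apply: H2.
    by case: (consts (s i)) H1 => //= c cs _; rewrite mem_head.
  rewrite Hts -map_comp. apply/eq_in_map => v Hv /=.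
  case: v Hv => [i|i] Hv /=.
    have Hin : s i \in A by apply: Hsub; rewrite Hts; exact: (map_f (skval s) Hv).
    by rewrite /Gm Hin.
  by rewrite -map_comp.
- move=> t Ht. apply: consts_Hm. exact: (allP hA).
Qed.
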